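(* If $\gamma<\frac14$ and $|\mu_r-\mu_s|\ge c\frac{\phi_\ast}{n_s}$ for all $r\ne s$, then $$\rho^s_{in}\le\frac{2}{(1-4\gamma)c}\quad\text{and}\quad\rho^s_{out}\le\frac{2}{(1-4\gamma)c}.$$
   Context: Points $x_1,\dots,x_N$ are real numbers, each drawn from one of $\beta$ distributions with distinct means $\mu_1,\dots,\mu_\beta$; $\mathcal T_s$ is the set of points from distribution $s$, $n_s=|\mathcal T_s|$; $\phi_\ast=\sum_i|x_i-\mathbb{E}(x_i)|$; $c>0$ a constant. $\nu_1,\dots,\nu_\beta$ are real cluster centers and $S_r=\{x_i:|x_i-\nu_r|\le|x_i-\nu_s|\ \forall s\}$. $\Delta_s=|\mu_s-\nu_s|$, $\gamma=\max_{s,\,r\ne s}\frac{\Delta_s}{|\mu_r-\mu_s|}$. $\rho^s_{in}=\frac{\sum_{r\ne s}|\mathcal T_r\cap S_s|}{n_s}$ (fraction of points misclassified into cluster $s$) and $\rho^s_{out}=\frac{\sum_{r\ne s}|\mathcal T_s\cap S_r|}{n_s}$ (fraction of points of $\mathcal T_s$ misclassified). *)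

(* Defs.v *)
From mathcomp Require Import all_boot all_order all_algebra.
Set Implicit Arguments. Unset Strict Implicit. Unset Printing Implicit Defensive.
Import Order.TTheory GRing.Theory Num.Theory.
Local Open Scope ring_scope.

Section Clustering.
Variables (R : realFieldType) (N beta : nat).
(* x : the points; lab i : index of the distribution point i is drawn from;
   mu : the means; nu : the cluster centers. *)
Variables (x : 'I_N -> R) (lab : 'I_N -> 'I_beta) (mu nu : 'I_beta -> R).

Definition Tset (s : 'I_beta) : {set 'I_N} := [set i | lab i == s].
Definition nsize (s : 'I_beta) : R := #|Tset s|%:R.
Definition Sset (r : 'I_beta) : {set 'I_N} :=
  [set i | [forall t, `|x i - nu r| <= `|x i - nu t|]].
(* phi_* = sum_i |x_i - E(x_i)|, with E(x_i) = mu_(lab i) *)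
Definition phi_star : R := \sum_(i < N) `|x i - mu (lab i)|.
Definition Delta (s : 'I_beta) : R := `|mu s - nu s|.
Definition gamma : R :=
  \big[Num.max/0]_(s < beta) \big[Num.max/0]_(r < beta | r != s)
     (Delta s / `|mu r - mu s|).
Definition rho_in (s : 'I_beta) : R :=
  (\sum_(r < beta | r != s) #|Tset r :&: Sset s|%:R) / nsize s.
Definition rho_out (s : 'I_beta) : R :=
  (\sum_(r < beta | r != s) #|Tset s :&: Sset r|%:R) / nsize s.
End Clustering.

(* Main.v *)
Require Import Defs.
From mathcomp Require Import all_boot all_order all_algebra.
From mathcomp Require Import ring lra.
Import Order.TTheory GRing.Theory Num.Theory.
Local Open Scope ring_scope.

Lemma abs_cases (R : realFieldType) (u v : R) : `|u| = `|v| -> u = v \/ u = - v.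
Proof.
case: (lerP 0 u) => hu; case: (lerP 0 v) => hv;
  rewrite ?(ger0_norm hu) ?(ger0_norm hv) ?(ltr0_norm hu) ?(ltr0_norm hv) => h;
  [left|right|right|left]; lra.
Qed.

Lemma tie_side (R : realFieldType) (u w : R) :
  `|u| <= `|w| -> `|u - w| <= `|w| \/ `|- u - w| <= `|w|.
Proof.
case: (lerP 0 u) => hu; case: (lerP 0 w) => hw;
  rewrite ?(ger0_norm hu) ?(ger0_norm hw) ?(ltr0_norm hu) ?(ltr0_norm hw) => h.
- left; rewrite ler_norml; lra.
- right; rewrite ler_norml; lra.
- right; rewrite ler_norml; lra.
- left; rewrite ler_norml; lra.
Qed.

Lemma G1 (R : realFieldType) (x na nb ma mb g : R) :
  `|x - nb| <= `|x - na| -> `|ma - na| <= g * `|ma - mb| ->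
  `|mb - nb| <= g * `|ma - mb| ->
  `|ma - mb| / 2 - 2 * (g * `|ma - mb|) <= `|x - ma|.
Proof.
move=> h1 h2 h3.
have t1 := ler_distD x na nb.
have t2 := ler_distD na ma mb.
have t3 := ler_distD nb na mb.
have t4 := ler_distD ma x na.
rewrite (distrC na x) in t1.
rewrite (distrC nb mb) in t3.
set D := `|ma - mb| in h2 h3 t2 *.
set gD := g * D in h2 h3 *.
lra.
Qed.

Lemma G2t (R : realFieldType) (x ns nt ms mt g K : R) :
  `|nt - ns| <= `|x - ns| -> `|ms - ns| <= g * `|mt - ms| ->
  `|mt - nt| <= g * `|mt - ms| -> 0 <= g -> K <= `|mt - ms| -> 0 <= 1 - 4 * g ->
  (1 - 4 * g) * K <= `|x - ms|.
Proof.
move=> h1 h2 h3 hg hK h4.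
have t1 := ler_distD nt mt ms.
have t2 := ler_distD ns nt ms.
have t3 := ler_distD ms x ns.
rewrite (distrC ns ms) in t2.
have hm : (1 - 4 * g) * K <= `|mt - ms| - 4 * (g * `|mt - ms|).
  by apply: (le_trans (ler_wpM2l h4 hK)); rewrite mulrBl mul1r -mulrA.
have hgd : 0 <= g * `|mt - ms| by rewrite mulr_ge0.
set L := (1 - 4 * g) * K in hm *.
set D := `|mt - ms| in h2 h3 t1 hm hgd *.
set gD := g * D in h2 h3 hm hgd *.
lra.
Qed.
Arguments G1 {R x na nb ma mb g}.
Arguments G2t {R x ns nt ms mt g K}.
Arguments abs_cases {R u v}.
Arguments tie_side {R u w}.

Lemma sub_sum_le (R : realFieldType) (I : finType) (P Q : pred I) (F : I -> R) :
  (forall i, P i -> Q i) -> (forall i, Q i -> 0 <= F i) ->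
  \sum_(i | P i) F i <= \sum_(i | Q i) F i.
Proof.
move=> hPQ hF.
rewrite [X in _ <= X](bigID P) /=.
rewrite (eq_bigl P); last first.
  by move=> i; case: (boolP (P i)) => h; rewrite ?andbT ?andbF ?(hPQ i h).
rewrite lerDl; apply: sumr_ge0 => i /andP[hq _]; exact: hF.
Qed.

Section Main.
Variables (R : realFieldType) (N beta : nat).
Variables (x : 'I_N -> R) (lab : 'I_N -> 'I_beta) (mu nu : 'I_beta -> R).
Hypothesis hmu : injective mu.
Variable s : 'I_beta.
Hypothesis hgamma : gamma mu nu < 1 / 4.

Let g := gamma mu nu.

Lemma g_ge0 : 0 <= g.
Proof. exact: bigmax_ge_id. Qed.

Lemma hD {a b} : a != b -> `|mu a - nu a| <= g * `|mu a - mu b|.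
Proof.
move=> hab.
have pos : 0 < `|mu b - mu a|.
  by rewrite normr_gt0 subr_eq0 (inj_eq hmu) eq_sym.
have h1 : Delta mu nu a / `|mu b - mu a| <= g.
  apply: le_trans (le_bigmax _ _ a).
  by apply: (le_bigmax_cond _ (P := fun r => r != a)); rewrite eq_sym.
by rewrite ler_pdivrMr // distrC in h1.
Qed.

Lemma nu_inj {a b} : a != b -> nu a != nu b.
Proof.
move=> hab; apply/eqP => e.
have pos : 0 < `|mu a - mu b| by rewrite normr_gt0 subr_eq0 (inj_eq hmu).
have h1 := hD hab.
have hba : b != a by rewrite eq_sym.
have h2' := hD hba; rewrite (distrC (mu b) (mu a)) in h2'.
have t := ler_distD (nu a) (mu a) (mu b).
rewrite e (distrC (nu b)) in t; rewrite e in h1.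
have hg : g * `|mu a - mu b| < `|mu a - mu b| / 4.
  by rewrite [g * _]mulrC ltr_pM2l // -div1r.
set D := `|mu a - mu b| in h1 h2' t hg pos.
set gD := g * D in h1 h2' hg.
lra.
Qed.

Let f i := `|x i - mu (lab i)|.
Let B K := (1 - 4 * g) / 2 * K.

Lemma cnt_in K : 0 <= K -> (forall r, r != s -> K <= `|mu r - mu s|) ->
  (\sum_(r < beta | r != s) #|Tset lab r :&: Sset x nu s|%:R) * B K
    <= phi_star x lab mu.
Proof.
move=> hK0 hK.
have h4 : 0 <= 1 - 4 * g by move: hgamma; rewrite /g; lra.
rewrite mulr_suml.
apply: le_trans (_ : \sum_(r < beta | r != s)
   \sum_(i in Tset lab r :&: Sset x nu s) f i <= _).
  apply: ler_sum => r hr; rewrite mulr_natl -sumr_const.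
  apply: ler_sum => i; rewrite !inE => /andP[/eqP hT /forallP hS].
  rewrite /f hT.
  have hsr : s != r by rewrite eq_sym.
  have h3 := hD hsr; rewrite (distrC (mu s) (mu r)) in h3.
  have hG := G1 (hS r) (hD hr) h3.
  have hm : B K <= (1 - 4 * g) / 2 * `|mu r - mu s|.
    by apply: ler_wpM2l; [lra | exact: hK].
  rewrite /B in hm *.
  set D := `|mu r - mu s| in hG hm.
  set L := (1 - 4 * g) / 2 * K in hm *.
  nra.
have -> : \sum_(r < beta | r != s) \sum_(i in Tset lab r :&: Sset x nu s) f i =
   \sum_(i | (lab i != s) && (i \in Sset x nu s)) f i.
  rewrite [RHS](partition_big lab (fun r => r != s)) /=; last by move=> i /andP[].
  apply: eq_bigr => r hr; apply: eq_bigl => i; rewrite !inE.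
  by case: (lab i =P r) => [->|]; rewrite ?hr ?andbT ?andbF ?andTb.
rewrite /phi_star; apply: (@sub_sum_le _ _ _ xpredT) => // i _; exact: normr_ge0.
Qed.

Lemma per_point K i : 0 <= K -> (forall r, r != s -> K <= `|mu r - mu s|) ->
  lab i = s ->
  #|[set r | (r != s) && (i \in Sset x nu r)]|%:R * B K <= `|x i - mu s|.
Proof.
move=> hK0 hK hi.
have h4 : 0 <= 1 - 4 * g by move: hgamma; rewrite /g; lra.
set A := [set r | _].
have memA r : r \in A -> r != s /\ forall t, `|x i - nu r| <= `|x i - nu t|.
  by rewrite !inE => /andP[? /forallP].
have hB r : r \in A -> B K <= `|x i - mu s|.
  move=> /memA[hr hS].
  have hsr : s != r by rewrite eq_sym.
  have h3 := hD hr; rewrite (distrC (mu r) (mu s)) in h3.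
  have hG := G1 (hS s) (hD hsr) h3.
  have hm : B K <= (1 - 4 * g) / 2 * `|mu s - mu r|.
    by apply: ler_wpM2l; [lra | rewrite distrC; exact: hK].
  rewrite /B in hm *.
  set D := `|mu s - mu r| in hG hm.
  set L := (1 - 4 * g) / 2 * K in hm *.
  nra.
have eqd a b : a \in A -> b \in A -> `|x i - nu a| = `|x i - nu b|.
  move=> /memA[_ ha] /memA[_ hb]; apply/eqP; rewrite eq_le ha hb //.
have h2 a b : a \in A -> b \in A -> a != b -> (1 - 4 * g) * K <= `|x i - mu s|.
  move=> ha hb hab.
  have hnab := nu_inj hab.
  have [_ haS] := memA a ha.
  have [ha0 _] := memA a ha.
  have [hb0 _] := memA b hb.
  case: (abs_cases (eqd a b ha hb)) => e.
    by exfalso; move/eqP: hnab; apply; lra.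
  have hu : `|nu a - x i| <= `|nu s - x i| by rewrite distrC (distrC (nu s)); exact: haS.
  have hsa : s != a by rewrite eq_sym.
  have hsb : s != b by rewrite eq_sym.
  case: (tie_side hu) => ht.
    rewrite (_ : nu a - x i - (nu s - x i) = nu a - nu s) in ht; last by ring.
    rewrite (distrC (nu s)) in ht.
    have h3 := hD hsa; rewrite (distrC (mu s) (mu a)) in h3.
    exact: (G2t ht h3 (hD ha0) g_ge0 (hK a ha0) h4).
  rewrite (_ : - (nu a - x i) - (nu s - x i) = nu b - nu s) in ht; last by lra.
  rewrite (distrC (nu s)) in ht.
  have h3 := hD hsb; rewrite (distrC (mu s) (mu b)) in h3.
  exact: (G2t ht h3 (hD hb0) g_ge0 (hK b hb0) h4).
have [k hk] : exists k, #|A| = k by eexists.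
case: k hk => [|[|[|k]]] hk.
- by rewrite hk mul0r normr_ge0.
- have /cards1P[r hr] : #|A| == 1%N by rewrite hk.
  rewrite hk mul1r; by apply: hB; rewrite hr inE.
- have /cards2P[a [b [hab hAe]]] : #|A| == 2%N by rewrite hk.
  rewrite hk (_ : 2%:R * B K = (1 - 4 * g) * K); last by rewrite /B; lra.
  by apply: (h2 a b) => //; rewrite hAe !inE eqxx ?orbT.
- exfalso.
  have : (0 < #|A|)%N by rewrite hk.
  rewrite card_gt0 => /set0Pn[a ha].
  have e1 := cardsD1 a A; rewrite ha hk /= add1n in e1; case: e1 => e1.
  have : (0 < #|A :\ a|)%N by rewrite -e1.
  rewrite card_gt0 => /set0Pn[b]; rewrite in_setD1 => /andP[hba hb].
  have e2 := cardsD1 b (A :\ a); rewrite in_setD1 hba hb -e1 /= add1n in e2.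
  case: e2 => e2.
  have : (0 < #|A :\ a :\ b|)%N by rewrite -e2.
  rewrite card_gt0 => /set0Pn[c]; rewrite !in_setD1 => /andP[hcb /andP[hca hc]].
  have hab : a != b by rewrite eq_sym.
  case: (abs_cases (eqd a b ha hb)) => eb.
    by move/eqP: (nu_inj hab); apply; lra.
  case: (abs_cases (eqd a c ha hc)) => ec.
    have hac : a != c by rewrite eq_sym.
    by move/eqP: (nu_inj hac); apply; lra.
  have hbc : b != c by rewrite eq_sym.
  by move/eqP: (nu_inj hbc); apply; lra.
Qed.

Lemma cnt_out K : 0 <= K -> (forall r, r != s -> K <= `|mu r - mu s|) ->
  (\sum_(r < beta | r != s) #|Tset lab s :&: Sset x nu r|%:R) * B K
    <= phi_star x lab mu.
Proof.
move=> hK0 hK.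
rewrite mulr_suml.
under eq_bigr => r _ do rewrite mulr_natl -sumr_const.
rewrite (exchange_big_dep (fun i => i \in Tset lab s)) /=; last first.
  by move=> r i _; rewrite inE => /andP[].
apply: le_trans (_ : \sum_(i | i \in Tset lab s) f i <= _); last first.
  rewrite /phi_star; apply: (@sub_sum_le _ _ _ xpredT) => // i _; exact: normr_ge0.
apply: ler_sum => i hi.
rewrite sumr_const -mulr_natl.
have hl : lab i = s by move: hi; rewrite inE => /eqP.
have -> : #|[pred r | (r != s) && (i \in Tset lab s :&: Sset x nu r)]| =
          #|[set r | (r != s) && (i \in Sset x nu r)]|.
  by apply: eq_card => r; rewrite !inE hl eqxx.
rewrite /f hl; exact: per_point.
Qed.

Lemma final cnt (c : R) : 0 < c -> 0 <= cnt ->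
  (forall r, r != s -> `|mu r - mu s| >= c * phi_star x lab mu / nsize R lab s) ->
  (forall K, 0 <= K -> (forall r, r != s -> K <= `|mu r - mu s|) ->
     cnt * B K <= phi_star x lab mu) ->
  cnt / nsize R lab s <= 2 / ((1 - 4 * g) * c).
Proof.
move=> hc hcnt hsep H.
have h4 : 0 < 1 - 4 * g by move: hgamma; rewrite /g; lra.
have hR : 0 < 2 / ((1 - 4 * g) * c) by rewrite divr_gt0 // mulr_gt0.
have hn : 0 <= nsize R lab s by exact: ler0n.
case: (eqVneq (nsize R lab s) 0) => [->|hn0].
  by rewrite invr0 mulr0 ltW.
have hnp : 0 < nsize R lab s by rewrite lt_def hn0 hn.
have hphi : 0 <= phi_star x lab mu by apply: sumr_ge0 => i _; exact: normr_ge0.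
case: (eqVneq (phi_star x lab mu) 0) => hp0.
  set K0 := \big[Num.min/1]_(r | r != s) `|mu r - mu s|.
  have hK0p : 0 < K0.
    rewrite /K0; elim/big_ind: _ => //.
      by move=> u v hu hv; rewrite lt_min hu hv.
    by move=> r hr; rewrite normr_gt0 subr_eq0 (inj_eq hmu).
  have hKle r : r != s -> K0 <= `|mu r - mu s|.
    by move=> hr; exact: bigmin_le_cond.
  have := H K0 (ltW hK0p) hKle; rewrite hp0 => hle.
  have hP : 0 < B K0 by rewrite /B mulr_gt0 // divr_gt0.
  have hc0 : cnt <= 0 by nra.
  have -> : cnt = 0 by apply/eqP; rewrite eq_le hc0 hcnt.
  by rewrite mul0r ltW.
have hphip : 0 < phi_star x lab mu by rewrite lt_def hp0 hphi.
have hK0 : 0 <= c * phi_star x lab mu / nsize R lab s.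
  by rewrite divr_ge0 // mulr_ge0 // ltW.
have H' := H _ hK0 hsep.
rewrite ler_pdivlMr ?mulr_gt0 //.
rewrite -(ler_pM2r hphip).
have -> : cnt / nsize R lab s * ((1 - 4 * g) * c) * phi_star x lab mu =
          2 * (cnt * B (c * phi_star x lab mu / nsize R lab s)).
  by rewrite /B; field; rewrite hn0.
lra.
Qed.
End Main.

Theorem lemma9 (R : realFieldType) (N beta : nat)
  (x : 'I_N -> R) (lab : 'I_N -> 'I_beta) (mu nu : 'I_beta -> R) (c : R)
  (hc : 0 < c) (hmu : injective mu) (s : 'I_beta)
  (hgamma : gamma mu nu < 1 / 4)
  (hsep : forall r : 'I_beta, r != s ->
     `|mu r - mu s| >= c * phi_star x lab mu / nsize R lab s) :
  rho_in x lab nu s <= 2 / ((1 - 4 * gamma mu nu) * c) /\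
  rho_out x lab nu s <= 2 / ((1 - 4 * gamma mu nu) * c).
Proof.
split.
- apply: (@final R N beta x lab mu nu hmu s hgamma _ c hc _ hsep).
    by apply: sumr_ge0 => r _; exact: ler0n.
  move=> K hK0 hK; exact: (@cnt_in R N beta x lab mu nu hmu s hgamma K hK0 hK).
- apply: (@final R N beta x lab mu nu hmu s hgamma _ c hc _ hsep).
    by apply: sumr_ge0 => r _; exact: ler0n.
  move=> K hK0 hK; exact: (@cnt_out R N beta x lab mu nu hmu s hgamma K hK0 hK).
Qed.
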